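(* Let $n,s$ be positive integers with $2s\le n$ and let $L=[s]=\{1,\ldots,s\}$. Let $\mathcal{F}\subseteq2^{[n]}$ be $L$-close Sperner (respectively, $L$-differencing Sperner). Then there exists $\mathcal{F}'\subseteq2^{[n]}$ with $|\mathcal{F}'|=|\mathcal{F}|$, such that $s\le|A|\le n-s$ for every $A\in\mathcal{F}'$, and $\mathcal{F}'$ is $L$-close Sperner (respectively, $L$-differencing Sperner).
   Context: $\mathcal{F}\subseteq2^{[n]}$ is $L$-differencing Sperner if $|A\setminus B|\in L$ for all distinct $A,B\in\mathcal{F}$, and $L$-close Sperner if $\min\{|A\setminus B|,|B\setminus A|\}\in L$ for all distinct $A,B\in\mathcal{F}$. *)

(* Defs.v *)
From mathcomp Require Import all_boot.
Set Implicit Arguments. Unset Strict Implicit. Unset Printing Implicit Defensive.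

(* Ground set [n] is represented by 'I_n; families are F : {set {set 'I_n}}. *)

Definition L_differencing (n : nat) (L : pred nat) (F : {set {set 'I_n}}) : Prop :=
  forall A B, A \in F -> B \in F -> A != B -> L #|A :\: B|.

Definition L_close (n : nat) (L : pred nat) (F : {set {set 'I_n}}) : Prop :=
  forall A B, A \in F -> B \in F -> A != B -> L (minn #|A :\: B| #|B :\: A|).

Definition range1 (s : nat) : pred nat := fun k => (1 <= k) && (k <= s).

(* Main.v *)
Require Import Defs.
From mathcomp Require Import all_boot.
From mathcomp Require Import zify.
Set Implicit Arguments. Unset Strict Implicit. Unset Printing Implicit Defensive.

Section S.
Variable n : nat.

Definition good (ok : {set 'I_n} -> {set 'I_n} -> bool) (F : {set {set 'I_n}}) :=
  forall A B, A \in F -> B \in F -> A != B -> (0 < #|A :\: B|) && ok A B.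

Lemma gt0D (A B : {set 'I_n}) : (0 < #|A :\: B|) = ~~ (A \subset B).
Proof. by rewrite card_gt0 setD_eq0. Qed.

Lemma sub_of_card (N : {set {set 'I_n}}) m : m <= #|N| ->
  exists H : {set {set 'I_n}}, H \subset N /\ #|H| = m.
Proof.
elim: m => [|m IH] le.
  by exists (set0 : {set {set 'I_n}}); rewrite sub0set cards0.
have [H [sHN cH]] := IH (ltnW le).
have : #|N :\: H| > 0 by rewrite cardsD (setIidPr sHN) cH subn_gt0.
case/card_gt0P=> x /setDP [xN xH].
exists (x |: H); split.
  by rewrite subUset sub1set xN.
by rewrite cardsU1 xH cH add1n.
Qed.

Lemma sum_bool_card (T : finType) (N : {set T}) (P : pred T) :
  \sum_(X in N) (P X : nat) = #|[set X in N | P X]|.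
Proof.
rewrite -sum1_card big_mkcond [RHS]big_mkcond /=; apply: eq_bigr => X _.
by rewrite !inE; case: (X \in N); case: (P X).
Qed.

Lemma shadow k (G : {set {set 'I_n}}) :
  k.+1 <= n - k -> (forall A, A \in G -> #|A| = k) ->
  #|G| <= #|[set X : {set 'I_n} | (#|X| == k.+1) && [exists A in G, A \subset X]]|.
Proof.
move=> hk hG.
set N := [set X : {set 'I_n} | _].
pose P (A X : {set 'I_n}) := (A \subset X) && (#|X| == k.+1).
have h1 : #|G| * (n - k) <= \sum_(A in G) \sum_(X in N) (P A X : nat).
  rewrite -sum_nat_const; apply: leq_sum => A AG.
  rewrite sum_bool_card.
  have cC : #|~: A| = n - k.
    by have := cardsC A; rewrite card_ord hG //; lia.
  rewrite -cC -(@card_in_imset _ _ (fun x => x |: A)); last first.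
    move=> x y; rewrite !inE => xA yA e.
    have := setU11 x A; rewrite e in_setU1 => /orP [/eqP //|].
    by rewrite (negbTE xA).
  apply: subset_leq_card; apply/subsetP => X /imsetP [x xA ->]; rewrite inE in xA.
  have cX : #|x |: A| = k.+1 by rewrite cardsU1 xA hG.
  rewrite !inE /P cX eqxx subsetUr /= andbT.
  by apply/existsP; exists A; rewrite AG subsetUr.
have h2 : \sum_(X in N) \sum_(A in G) (P A X : nat) <= #|N| * k.+1.
  rewrite -sum_nat_const; apply: leq_sum => X XN.
  rewrite sum_bool_card.
  have cX : #|X| = k.+1 by move: XN; rewrite inE => /andP [/eqP].
  rewrite -cX.
  set GX := [set A in G | P A X].
  have sub : forall A, A \in GX -> A \subset X.
    by move=> A; rewrite inE /P => /andP [_ /andP []].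
  rewrite -(@card_in_imset _ _ (fun A => X :\: A) GX); last first.
    move=> A B AG BG /= e.
    have f : forall C : {set 'I_n}, C \subset X -> X :\: (X :\: C) = C.
      by move=> C hC; rewrite setDDr setDv set0U (setIidPr hC).
    by rewrite -(f A (sub A AG)) -(f B (sub B BG)) e.
  apply: (leq_trans _ (leq_imset_card (fun x => [set x]) X)).
  apply: subset_leq_card; apply/subsetP => Y /imsetP [A AG ->].
  have AG' := AG; rewrite inE in AG'; case/andP: AG' => AG'' _.
  have : #|X :\: A| == 1.
    by rewrite cardsD (setIidPr (sub A AG)) cX hG // subSnn.
  case/cards1P => x ex; rewrite ex.
  apply/imsetP; exists x => //.
  by have := set11 x; rewrite -ex => /setDP [].
rewrite exchange_big /= in h2.
have : #|G| * k.+1 <= #|N| * k.+1.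
  apply: leq_trans (leq_trans h1 h2); exact: leq_mul.
by rewrite leq_pmul2r.
Qed.


Lemma raise (s u : nat) (ok : {set 'I_n} -> {set 'I_n} -> bool)
  (H1 : forall X Y : {set 'I_n}, #|X| <= s -> ok X Y)
  (H2 : forall A B X : {set 'I_n}, A \subset X -> #|X| <= s -> ok B A -> ok B X) :
  0 < s -> 2 * s <= n -> s <= u -> forall d F, good ok F ->
  (forall A, A \in F -> s - d <= #|A| <= u) ->
  exists F' : {set {set 'I_n}}, #|F'| = #|F| /\ good ok F' /\
    (forall A, A \in F' -> s <= #|A| <= u).
Proof.
move=> s0 sn su; elim=> [|d IH] F gF hF.
  by exists F; split=> //; split=> // A /hF; rewrite subn0.
set k := s - d.+1.
have ks : k < s by rewrite /k; lia.
set G := [set A in F | #|A| == k].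
have Gin : forall A, (A \in G) = (A \in F) && (#|A| == k) by move=> A; rewrite /G inE.
have hG : forall A, A \in G -> #|A| = k by move=> A; rewrite Gin => /andP [_ /eqP].
have kn : k.+1 <= n - k by lia.
have ek : k = s - d.+1 by [].
clearbody k.
have [H [sHN cH]] := sub_of_card (shadow kn hG).
have Hin : forall X, X \in H -> #|X| = k.+1 /\ exists2 A, A \in G & A \subset X.
  move=> X /(subsetP sHN); rewrite inE => /andP [/eqP -> /existsP [A /andP [AG AX]]].
  by split=> //; exists A.
have anti : forall A B, A \in F -> B \in F -> A != B -> ~~ (A \subset B).
  by move=> A B AF BF AB; have := gF A B AF BF AB; rewrite gt0D => /andP [].
have GF : G \subset F by apply/subsetP => A; rewrite Gin => /andP [].
have HF : forall X, X \in H -> X \notin F.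
  move=> X XH; apply/negP => XF; have [cX [A AG AX]] := Hin X XH.
  have AF := subsetP GF A AG.
  have AX' : A != X by apply/eqP => e; move: cX; rewrite -e hG //; lia.
  by have := anti A X AF XF AX'; rewrite AX.
set F1 := (F :\: G) :|: H.
have card1 : #|F1| = #|F|.
  have dis : (F :\: G) :&: H = set0.
    apply/eqP; rewrite -subset0; apply/subsetP => X; rewrite !inE => /andP [/andP [_ XF] XH].
    by rewrite (negbTE (HF X XH)) in XF.
  rewrite /F1 cardsU dis cards0 subn0 cardsD (setIidPr GF) cH subnK //.
  exact: subset_leq_card.
have oldsz : forall A, A \in F -> A \notin G -> k < #|A| <= u.
  move=> A AF AG; have := hF A AF; rewrite Gin AF /= in AG.
  move: AG => ne /andP [h1 ->]; rewrite andbT ltn_neqAle eq_sym ne ek //.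
rewrite -card1; apply: IH.
- move=> A B; case/setUP=> [/setDP [AF AG] | AH]; case/setUP=> [/setDP [BF BG] | BH] AB.
  + exact: gF.
  + have [cB [C CG CB]] := Hin B BH.
    have CF := subsetP GF C CG.
    apply/andP; split.
      rewrite gt0D; apply/negP => AsB.
      have := oldsz A AF AG => /andP [h _].
      have : A == B by rewrite eqEcard AsB cB.
      by move/eqP => e; move: (HF B BH); rewrite -e AF.
    apply: (H2 _ _ _ CB); first by rewrite cB.
    have AC : A != C by apply/eqP => e; move: AG; rewrite e CG.
    by case/andP: (gF A C AF CF AC).
  + have [cA [C CG CA]] := Hin A AH.
    have CF := subsetP GF C CG.
    apply/andP; split; last by apply: H1; rewrite cA.
    rewrite gt0D; apply/negP => AsB.
    have CB : C != B by apply/eqP => e; move: BG; rewrite -e CG.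
    by have := anti C B CF BF CB; rewrite (subset_trans CA AsB).
  + have [cA _] := Hin A AH; have [cB _] := Hin B BH.
    apply/andP; split; last by apply: H1; rewrite cA.
    rewrite gt0D; apply/negP => AsB.
    have : A == B by rewrite eqEcard AsB cA cB leqnn.
    by rewrite (negbTE AB).
- move=> A; case/setUP=> [/setDP [AF AG] | AH].
    have := oldsz A AF AG => /andP [h1 h2]; apply/andP; split; lia.
  have [cA _] := Hin A AH; rewrite cA; apply/andP; split; lia.
Qed.

Lemma compl (ok : {set 'I_n} -> {set 'I_n} -> bool)
  (Hc : forall A B : {set 'I_n}, ok (~: A) (~: B) = ok B A) F :
  good ok F -> good ok [set ~: A | A in F] /\ #|[set ~: A | A in F]| = #|F|.
Proof.
move=> g; split; last by rewrite card_imset //; exact: setC_inj.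
move=> _ _ /imsetP [A AF ->] /imsetP [B BF ->] ne.
have ne' : B != A by apply: contra ne => /eqP ->.
have := g B A BF AF ne'.
by rewrite Hc !setDE setCK setIC.
Qed.

Lemma cardC (A : {set 'I_n}) : #|~: A| = n - #|A|.
Proof. by have := cardsC A; rewrite card_ord; lia. Qed.

Lemma main_gen (s : nat) (ok : {set 'I_n} -> {set 'I_n} -> bool)
  (H1 : forall X Y : {set 'I_n}, #|X| <= s -> ok X Y)
  (H2 : forall A B X : {set 'I_n}, A \subset X -> #|X| <= s -> ok B A -> ok B X)
  (Hc : forall A B : {set 'I_n}, ok (~: A) (~: B) = ok B A) F :
  0 < s -> 2 * s <= n -> good ok F ->
  exists F' : {set {set 'I_n}}, #|F'| = #|F| /\
       (forall A, A \in F' -> s <= #|A| <= n - s) /\ good ok F'.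
Proof.
move=> s0 sn gF.
have su : s <= n by lia.
have hF : forall A, A \in F -> s - s <= #|A| <= n.
  by move=> A _; rewrite subnn /=; have := max_card (mem A); rewrite card_ord.
have [F1 [c1 [g1 h1]]] := @raise s n ok H1 H2 s0 sn su s F gF hF.
have [g2 c2] := compl Hc g1.
have su' : s <= n - s by lia.
have hF2 : forall A, A \in [set ~: A | A in F1] -> s - s <= #|A| <= n - s.
  move=> A /imsetP [B BF ->]; rewrite subnn cardC.
  by have := h1 B BF => /andP [h h']; apply/andP; split; lia.
have [F3 [c3 [g3 h3]]] := @raise s (n - s) ok H1 H2 s0 sn su' s _ g2 hF2.
have [g4 c4] := compl Hc g3.
exists [set ~: A | A in F3]; split; first by rewrite c4 c3 c2 c1.
split=> // A /imsetP [B BF ->]; rewrite cardC.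
by have := h3 B BF => /andP [h h']; apply/andP; split; lia.
Qed.

End S.

Theorem mainTheorem10 (n s : nat) (F : {set {set 'I_n}}) :
  0 < n -> 0 < s -> 2 * s <= n ->
  (L_close (range1 s) F ->
     exists F' : {set {set 'I_n}}, #|F'| = #|F| /\
       (forall A, A \in F' -> s <= #|A| <= n - s) /\ L_close (range1 s) F') /\
  (L_differencing (range1 s) F ->
     exists F' : {set {set 'I_n}}, #|F'| = #|F| /\
       (forall A, A \in F' -> s <= #|A| <= n - s) /\ L_differencing (range1 s) F').
Proof.
move=> n0 s0 sn; split.
- pose ok (X Y : {set 'I_n}) := minn #|X :\: Y| #|Y :\: X| <= s.
  move=> hF.
  have gF : good ok F.
    move=> A B AF BF AB; have := hF A B AF BF AB; rewrite /range1 /ok.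
    by case/andP=> h1 ->; rewrite andbT; move: h1; rewrite leq_min => /andP [].
  have [|||F' [c [h g]]] := @main_gen n s ok _ _ _ F s0 sn gF.
  + by move=> X Y hX; rewrite /ok geq_min (leq_trans (subset_leq_card (subsetDl X Y)) hX).
  + by move=> A B X AX hX _; rewrite /ok geq_min; apply/orP; first [left; exact: leq_trans (subset_leq_card (subsetDl X B)) hX | right; exact: leq_trans (subset_leq_card (subsetDl X B)) hX].
  + by move=> A B; rewrite /ok !setDE !setCK (setIC (~: A)) (setIC (~: B)).
  exists F'; split=> //; split=> // A B AF BF AB.
  have BA : B != A by rewrite eq_sym.
  have := g A B AF BF AB; have := g B A BF AF BA.
  rewrite /range1 /ok => /andP [h1 _] /andP [h2 ->]; rewrite andbT leq_min h1 h2 //.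
- pose ok (X Y : {set 'I_n}) := #|X :\: Y| <= s.
  move=> hF.
  have [|||F' [c [h g]]] := @main_gen n s ok _ _ _ F s0 sn hF.
  + by move=> X Y hX; rewrite /ok (leq_trans (subset_leq_card (subsetDl X Y)) hX).
  + move=> A B X AX _; rewrite /ok => h; apply: leq_trans h.
    by apply: subset_leq_card; apply: setDS.
  + by move=> A B; rewrite /ok !setDE setCK setIC.
  by exists F'.
Qed.
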